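(* Let $\Omega\subset\mathbb{R}^d$ be an unbounded closed convex set and let $W,V\in C^1(\mathbb{R}^d)$ with $W$ $\lambda_W$-geodesically convex on $\Omega-\Omega$, $V$ $\lambda_V$-geodesically convex on $\Omega$, and $|\nabla W(x)|\le C_0(1+|x|)$, $|\nabla V(x)|\le C_0(1+|x|)$ for all $x$. Then there is a constant $C=C(W,V)>0$ (independent of $n$ and of the number of particles) such that the following holds: if $n\in\mathbb{N}$, $x^n_1,\dots,x^n_{k}\in\Omega\cap B(n)$, $m^n_i\ge0$ with $\sum_im^n_i=1$, $(x^n_i(t))_i$ is a locally absolutely continuous solution of $\dot x^n_i(t)=P_{x^n_i(t)}\big(-\sum_jm^n_j\nabla W(x^n_i(t)-x^n_j(t))-\nabla V(x^n_i(t))\big)$, $x^n_i(0)=x^n_i$, and $\mu^n(t)=\sum_im^n_i\delta_{x^n_i(t)}$, then $\mathrm{supp}(\mu^n(t))\subset\Omega\cap B(r(t))$ for all $t\ge0$ with $r(t)\le(n+1)\exp(Ct)$.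
   Context: $B(r)$ is the ball of radius $r$ centered at the origin. $T(\Omega,x)$ is the tangent cone of the convex set $\Omega$ at $x$ (closure of $\{s(y-x):s\ge0,y\in\Omega\}$) and $P_x(w)$ its nearest point to $w$. $\lambda$-geodesic convexity on convex $K$: $f(y)\ge f(x)+\langle\nabla f(x),y-x\rangle+\frac\lambda2|y-x|^2$ on $K$. *)

(* Defs.v *)
From HB Require Import structures.
From mathcomp Require Import all_boot all_order all_algebra.
From mathcomp Require Import all_classical all_reals all_analysis.
Set Implicit Arguments. Unset Strict Implicit. Unset Printing Implicit Defensive.
Import Order.TTheory GRing.Theory Num.Theory.
Import numFieldNormedType.Exports.
Local Open Scope classical_set_scope.
Local Open Scope ring_scope.

Section Defs.
Variables (R : realType) (d : nat).
Notation vec := 'rV[R]_d.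

Definition dotv (x y : vec) : R := \sum_(j < d) x 0 j * y 0 j.
Definition enorm (x : vec) : R := Num.sqrt (dotv x x).

Definition eball0 (r : R) : set vec := [set x | enorm x < r].

Definition evec (j : 'I_d) : vec := \row_(k < d) (if k == j then 1 else 0).

Definition grad (f : vec -> R) (x : vec) : vec :=
  \row_(j < d) ('D_(evec j) f x).

Definition C1 (f : vec -> R) : Prop :=
  (forall x, differentiable f x) /\ continuous (grad f).

Definition diffset (K : set vec) : set vec :=
  [set z | exists x y, K x /\ K y /\ z = x - y].

Definition lam_convex_on (K : set vec) (lam : R) (f : vec -> R) : Prop :=
  forall x y, K x -> K y ->
    f x + dotv (grad f x) (y - x) + lam / 2 * (enorm (y - x)) ^+ 2 <= f y.

Definition tcone (K : set vec) (x : vec) : set vec :=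
  closure [set v | exists s y, 0 <= s /\ K y /\ v = s *: (y - x)].

Definition nearest (S : set vec) (w p : vec) : Prop :=
  S p /\ forall q, S q -> enorm (w - p) <= enorm (w - q).

Definition abs_cont_on (a b : R) (f : R -> vec) : Prop :=
  forall e : R, 0 < e -> exists2 del : R, 0 < del &
    forall (n : nat) (s : 'I_n -> R * R),
      (forall i, a <= (s i).1 /\ (s i).1 <= (s i).2 /\ (s i).2 <= b) ->
      (forall i j, i != j -> (s i).2 <= (s j).1 \/ (s j).2 <= (s i).1) ->
      \sum_(i < n) ((s i).2 - (s i).1) < del ->
      \sum_(i < n) enorm (f (s i).2 - f (s i).1) < e.

Definition loc_abs_cont (f : R -> vec) : Prop :=
  forall T : R, 0 <= T -> abs_cont_on 0 T f.

(* support of the empirical measure sum_i m_i delta_{x_i} *)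
Definition supp_emp (k : nat) (m : 'I_k -> R) (x : 'I_k -> vec) : set vec :=
  [set y | exists i, 0 < m i /\ y = x i].

End Defs.

(* Main.v *)
Require Import Defs.
From HB Require Import structures.
From mathcomp Require Import all_boot all_order all_algebra.
From mathcomp Require Import all_classical all_reals all_analysis.
From mathcomp Require Import ring lra.
Import Order.TTheory GRing.Theory Num.Theory.
Import numFieldNormedType.Exports.
Local Open Scope classical_set_scope.
Local Open Scope ring_scope.
Section Enorm.
Context {R : realType} {d : nat}.
Notation vec := 'rV[R]_d.
Implicit Types (x y : vec).

Lemma dotv_ge0 x : 0 <= dotv x x.
Proof. by rewrite /dotv; apply: sumr_ge0 => j _; rewrite -expr2 sqr_ge0. Qed.

Lemma enorm_ge0 x : 0 <= enorm x.
Proof. exact: sqrtr_ge0. Qed.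

Lemma enorm_sq x : enorm x ^+ 2 = dotv x x.
Proof. by rewrite /enorm sqr_sqrtr // dotv_ge0. Qed.

Lemma dotvZ a x y : dotv (a *: x) y = a * dotv x y.
Proof. by rewrite /dotv mulr_sumr; apply: eq_bigr => j _; rewrite mxE mulrA. Qed.

Lemma dotvC x y : dotv x y = dotv y x.
Proof. by rewrite /dotv; apply: eq_bigr => j _; rewrite mulrC. Qed.

Lemma dotvD x y z : dotv (x + y) z = dotv x z + dotv y z.
Proof. by rewrite /dotv -big_split; apply: eq_bigr => j _; rewrite mxE mulrDl. Qed.

Lemma enormZ a x : enorm (a *: x) = `|a| * enorm x.
Proof.
rewrite /enorm dotvZ (dotvC x) dotvZ mulrA -expr2 sqrtrM ?sqr_ge0 //.
by rewrite sqrtr_sqr.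
Qed.

Lemma enormN x : enorm (- x) = enorm x.
Proof. by rewrite -scaleN1r enormZ normrN normr1 mul1r. Qed.

Lemma enorm0 : enorm (0 : vec) = 0.
Proof. by rewrite -(scale0r (0 : vec)) enormZ normr0 mul0r. Qed.

Lemma enorm_eq0_coord x j : enorm x = 0 -> x 0 j = 0.
Proof.
move=> h; have : dotv x x = 0 by rewrite -enorm_sq h expr0n.
rewrite /dotv => /eqP; rewrite psumr_eq0; last by move=> i _; rewrite -expr2 sqr_ge0.
by move=> /allP /(_ j (mem_index_enum j)) /=; rewrite mulf_eq0 orbb => /eqP.
Qed.

Lemma cauchy_schwarz x y : dotv x y <= enorm x * enorm y.
Proof.
have [a0|a0] := eqVneq (enorm x) 0.
  rewrite a0 mul0r /dotv (eq_bigr (fun=> 0)); first by rewrite big1.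
  by move=> j _; rewrite enorm_eq0_coord // mul0r.
have [b0|b0] := eqVneq (enorm y) 0.
  rewrite b0 mulr0 /dotv (eq_bigr (fun=> 0)); first by rewrite big1.
  by move=> j _; rewrite (enorm_eq0_coord _ _ b0) mulr0.
set a := enorm x; set b := enorm y.
have ga : 0 < a by rewrite lt_def a0 enorm_ge0.
have gb : 0 < b by rewrite lt_def b0 enorm_ge0.
have H : \sum_(j < d) (2 * a * b * (x 0 j * y 0 j)) <=
         \sum_(j < d) (b ^+ 2 * (x 0 j * x 0 j) + a ^+ 2 * (y 0 j * y 0 j)).
  apply: ler_sum => j _.
  have := sqr_ge0 (b * x 0 j - a * y 0 j); set u := x 0 j; set v := y 0 j.
  move=> h; nra.
rewrite -mulr_sumr big_split /= -!mulr_sumr -/(dotv x y) -/(dotv x x) -/(dotv y y) in H.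
rewrite -!enorm_sq -/a -/b in H.
have hab : 0 < a * b by rewrite mulr_gt0.
nra.
Qed.

Lemma enormD x y : enorm (x + y) <= enorm x + enorm y.
Proof.
have h1 : enorm (x + y) ^+ 2 <= (enorm x + enorm y) ^+ 2.
  rewrite enorm_sq dotvD (dotvC x) (dotvC y) !dotvD -!enorm_sq.
  have := cauchy_schwarz x y; rewrite (dotvC y x); nra.
have := enorm_ge0 (x + y); have := enorm_ge0 x; have := enorm_ge0 y.
nra.
Qed.

Lemma enormB x y : enorm (x - y) <= enorm x + enorm y.
Proof. by rewrite (le_trans (enormD _ _)) // enormN. Qed.

Lemma enorm_sum (I : Type) (r : seq I) (P : pred I) (F : I -> vec) :
  enorm (\sum_(i <- r | P i) F i) <= \sum_(i <- r | P i) enorm (F i).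
Proof.
apply: (big_ind2 (fun v c => enorm v <= c)) => //; first by rewrite enorm0.
by move=> v1 c1 v2 c2 h1 h2; rewrite (le_trans (enormD _ _)) // lerD.
Qed.

Lemma enorm_le_mx x : enorm x <= d%:R * `|x|.
Proof.
have hc j : x 0 j * x 0 j <= `|x| ^+ 2.
  rewrite -expr2 -real_normK ?num_real //; apply: lerXn2r; rewrite ?nnegrE //.
  have -> : `|x| = mx_norm x by [].
  rewrite mx_normrE; exact: (le_bigmax _ (fun ij : 'I_1 * 'I_d => `|x ij.1 ij.2|) (0, j)).
have h : dotv x x <= d%:R * `|x| ^+ 2.
  rewrite /dotv (le_trans (ler_sum _ (fun j _ => hc j))) //.
  by rewrite sumr_const card_ord mulr_natl.
rewrite /enorm (le_trans (ler_wsqrtr h)) //.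
have hd : d%:R * `|x| ^+ 2 <= (d%:R * `|x|) ^+ 2.
  rewrite exprMn ler_wpM2r ?sqr_ge0 //.
  case: d x {hc h} => [|dd] x; first by rewrite expr0n.
  rewrite expr2 ler_peMl ?ler0n // ler1n //.
rewrite (le_trans (ler_wsqrtr hd)) // sqrtr_sqr ger0_norm // mulr_ge0 //.
Qed.

End Enorm.
Section Deriv.
Context {R : realType} {d : nat}.
Notation vec := 'rV[R]_d.

Lemma deriv_est (f : R -> vec) t : derivable f t 1 ->
  forall e, 0 < e -> exists2 del, 0 < del & forall s, `|s - t| < del ->
    enorm (f s - f t - (s - t) *: 'D_1 f t) <= e * `|s - t|.
Proof.
move=> H e e0.
have e'0 : 0 < e / (d%:R + 1) by rewrite divr_gt0 // ltr_wpDl.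
have := (cvgrPdist_lt _ _).1 H _ e'0.
move=> /(_ _) Hn.
have [del del0 Hd] : exists2 del : R, 0 < del & forall h : R, ball 0 del h -> h != 0 ->
    `|'D_1 f t - h^-1 *: (f (h%:A + t) - f t)| < e / (d%:R + 1).
  move: Hn; rewrite /dnbhs /within /= => /nbhs_ballP[r r0 Hr]; exists r => // h hb hn.
exists del => // s hs.
have [->|hne] := eqVneq s t.
  by rewrite !subrr normr0 mulr0 scale0r subr0 enorm0.
have hne0 : s - t != 0 by rewrite subr_eq0.
have := Hd (s - t); rewrite /ball /= sub0r normrN => /(_ hs hne0).
rewrite [_%:A]mulr1 subrK.
set D := 'D_1 f t; set h := s - t => Hlt.
have -> : f s - f t - h *: D = - (h *: (D - h^-1 *: (f s - f t))).
  by rewrite scalerBr scalerA mulfV // scale1r opprB.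
rewrite enormN (le_trans (enorm_le_mx _)) //.
have -> : `|h *: (D - h^-1 *: (f s - f t))| = `|h| * `|D - h^-1 *: (f s - f t)|.
  exact: mx_normZ.
have hd : 0 <= d%:R :> R by [].
have hh : 0 <= `|h| by [].
rewrite mulrCA (mulrC e).
apply: ler_wpM2l => //.
rewrite (le_trans (ler_wpM2l hd (ltW Hlt))) //.
rewrite mulrA ler_pdivrMr ?ltr_wpDl // mulrC ler_wpM2l // ?(ltW e0) // lerDl //.
Qed.
End Deriv.
Section Barrier.
Context {R : realType}.
Notation mu := (@lebesgue_measure R).

Definition ac_real (a b : R) (f : R -> R) :=
  forall e : R, 0 < e -> exists2 del : R, 0 < del &
    forall (n : nat) (s : 'I_n -> R * R),
      (forall i, a <= (s i).1 /\ (s i).1 <= (s i).2 /\ (s i).2 <= b) ->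
      (forall i j, i != j -> (s i).2 <= (s j).1 \/ (s j).2 <= (s i).1) ->
      \sum_(i < n) ((s i).2 - (s i).1) < del ->
      \sum_(i < n) `|f (s i).2 - f (s i).1| < e.

Definition nth0 (L : seq (R * R)) i := nth (0, 0) L i.

Definition sorted_itv (L : seq (R * R)) :=
  (forall i j, (i < j < size L)%N -> (nth0 L i).2 <= (nth0 L j).1) /\
  (forall i, (i < size L)%N -> (nth0 L i).1 <= (nth0 L i).2).

Definition UL (L : seq (R * R)) : set R :=
  [set z | exists2 i, (i < size L)%N & (nth0 L i).1 < z <= (nth0 L i).2].

Definition sumlen (L : seq (R * R)) := \sum_(i < size L) ((nth0 L i).2 - (nth0 L i).1).

Lemma sumlen_rcons L p : sumlen (rcons L p) = sumlen L + (p.2 - p.1).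
Proof.
rewrite /sumlen size_rcons big_ord_recr /= /nth0 nth_rcons ltnn eqxx; congr (_ + _).
by apply: eq_bigr => i _; rewrite nth_rcons ltn_ord.
Qed.

Lemma sorted_rcons L p : sorted_itv (rcons L p) ->
  [/\ sorted_itv L, p.1 <= p.2 & forall i, (i < size L)%N -> (nth0 L i).2 <= p.1].
Proof.
move=> [h1 h2]; rewrite size_rcons in h1 h2.
have E i : (i < size L)%N -> nth0 (rcons L p) i = nth0 L i.
  by move=> iL; rewrite /nth0 nth_rcons iL.
have Ep : nth0 (rcons L p) (size L) = p by rewrite /nth0 nth_rcons ltnn eqxx.
split.
- split.
  + move=> i j /andP[ij jL].
    have iL : (i < size L)%N := ltn_trans ij jL.
    rewrite -(E i iL) -(E j jL); apply: h1.
    by rewrite ij /=; exact: ltnW.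
  + move=> i iL; rewrite -(E i iL); apply: h2; exact: ltnW.
- by rewrite -Ep; apply: h2.
- move=> i iL; have := h1 i (size L); rewrite E // Ep; apply.
  by rewrite iL /=.
Qed.

Lemma UL_rcons L p : UL (rcons L p) = UL L `|` `]p.1, p.2]%classic.
Proof.
apply/seteqP; split => z.
- move=> [i]; rewrite size_rcons ltnS leq_eqVlt => /orP[/eqP ->|iL].
    by rewrite /nth0 nth_rcons ltnn eqxx => hz; right; rewrite /= in_itv.
  by rewrite /nth0 nth_rcons iL => hz; left; exists i.
- move=> [[i iL hz]|].
    by exists i; [rewrite size_rcons ltnS ltnW | rewrite /nth0 nth_rcons iL].
  rewrite /= in_itv => hz; exists (size L); rewrite ?size_rcons //.
  by rewrite /nth0 nth_rcons ltnn eqxx.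
Qed.

Lemma UL_measure L : sorted_itv L -> measurable (UL L) /\ mu (UL L) = (sumlen L)%:E.
Proof.
elim/last_ind: L => [|L p IH].
  move=> _; have -> : UL [::] = set0 by apply/seteqP; split => z // [].
  by rewrite measure0 /sumlen big_ord0.
move=> /sorted_rcons[sL p12 hp]; have [mL muL] := IH sL.
rewrite UL_rcons sumlen_rcons; split; first by apply: measurableU => //; exact: measurable_itv.
rewrite measureU //; last first.
- apply/seteqP; split => z // [[i iL /andP[_ hz]]]; rewrite /= in_itv /= => /andP[hz2 _].
  by rewrite ltNge (le_trans hz (hp i iL)) in hz2.
change (mu (UL L) + mu `]p.1, p.2]%classic = (sumlen L + (p.2 - p.1))%:E)%E.
rewrite muL lebesgue_measure_itv /= lte_fin.
case: ifPn => h; first by rewrite !EFinD.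
have -> : p.2 = p.1 by apply/eqP; rewrite eq_le p12 andbT leNgt.
by rewrite subrr !addr0.
Qed.


Definition good (a y : R) (O : set R) (L : seq (R * R)) :=
  [/\ sorted_itv L,
      (forall i, (i < size L)%N -> a <= (nth0 L i).1 /\ (nth0 L i).2 <= y) &
      (forall i, (i < size L)%N -> `](nth0 L i).1, (nth0 L i).2]%classic `<=` O)].

Definition sumf (f : R -> R) (L : seq (R * R)) :=
  \sum_(i < size L) `|f (nth0 L i).2 - f (nth0 L i).1|.

Lemma sumf_rcons f L p : sumf f (rcons L p) = sumf f L + `|f p.2 - f p.1|.
Proof.
rewrite /sumf size_rcons big_ord_recr /= /nth0 nth_rcons ltnn eqxx; congr (_ + _).
by apply: eq_bigr => i _; rewrite nth_rcons ltn_ord.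
Qed.

Lemma sumf_ge0 f L : 0 <= sumf f L.
Proof. by apply: sumr_ge0. Qed.

Lemma good_nil a y O : good a y O [::].
Proof.
rewrite /good /sorted_itv; split; first split.
- by move=> i j /andP[_].
- by move=> i.
- by move=> i.
- by move=> i.
Qed.

Lemma good_mono a x y O L : good a x O L -> x <= y -> good a y O L.
Proof.
move=> [h1 h2 h3] xy; rewrite /good; split => // i iL; have [? ?] := h2 i iL; split => //.
exact: le_trans xy.
Qed.

Lemma good_rcons a x y O L p : good a x O L -> a <= x -> x <= p.1 -> p.1 <= p.2 ->
  p.2 <= y -> `]p.1, p.2]%classic `<=` O -> good a y O (rcons L p).
Proof.
move=> [[s1 s2] h2 h3] ax xp1 p12 p2y pO.
have E i : (i < size L)%N -> nth0 (rcons L p) i = nth0 L i.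
  by move=> iL; rewrite /nth0 nth_rcons iL.
have Ep : nth0 (rcons L p) (size L) = p by rewrite /nth0 nth_rcons ltnn eqxx.
have xy : x <= y by rewrite (le_trans xp1) // (le_trans p12).
rewrite /good /sorted_itv; split; first split.
- move=> i j; rewrite size_rcons => /andP[ij]; rewrite ltnS leq_eqVlt => /orP[/eqP jE|jL].
    have iL : (i < size L)%N by rewrite -jE.
    rewrite jE E // Ep (le_trans _ xp1) //; have [_] := h2 i iL; done.
  have iL : (i < size L)%N := ltn_trans ij jL.
  by rewrite !E //; apply: s1; rewrite ij.
- move=> i; rewrite size_rcons ltnS leq_eqVlt => /orP[/eqP ->|iL]; first by rewrite Ep.
  by rewrite E //; apply: s2.
- move=> i; rewrite size_rcons ltnS leq_eqVlt => /orP[/eqP ->|iL].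
    by rewrite Ep; split => //; rewrite (le_trans ax) // (le_trans xp1).
  rewrite E //; have [? ?] := h2 i iL; split => //; exact: le_trans xy.
- move=> i; rewrite size_rcons ltnS leq_eqVlt => /orP[/eqP ->|iL]; first by rewrite Ep.
  by rewrite E //; apply: h3.
Qed.

Lemma good_measure a y O L : good a y O L -> measurable O -> ((sumlen L)%:E <= mu O)%E.
Proof.
move=> [sL _ h3] mO; have [mU <-] := UL_measure L sL.
apply: le_measure; rewrite ?inE //.
by move=> z [i iL hz]; apply: (h3 i iL); rewrite /= in_itv.
Qed.

Lemma good_ac a b f O L y e del : (0 < e) ->
  (forall (n : nat) (s : 'I_n -> R * R),
      (forall i, a <= (s i).1 /\ (s i).1 <= (s i).2 /\ (s i).2 <= b) ->
      (forall i j, i != j -> (s i).2 <= (s j).1 \/ (s j).2 <= (s i).1) ->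
      \sum_(i < n) ((s i).2 - (s i).1) < del ->
      \sum_(i < n) `|f (s i).2 - f (s i).1| < e) ->
  good a y O L -> y <= b -> measurable O -> (mu O < del%:E)%E -> sumf f L < e.
Proof.
move=> e0 H gL yb mO muO.
have := H (size L) (fun i => nth0 L i).
have [[s1 s2] h2 h3] := gL.
apply.
- move=> i; have [? ?] := h2 i (ltn_ord i); split => //; split; first exact: s2.
  exact: le_trans yb.
- move=> i j; rewrite neq_ltn => /orP[ij|ji].
    by left; apply: s1; rewrite ij ltn_ord.
  by right; apply: s1; rewrite ji ltn_ord.
- by rewrite -lte_fin (le_lt_trans (good_measure _ _ _ _ gL mO)).
Qed.

End Barrier.
Section Barrier2.
Context {R : realType}.
Notation mu := (@lebesgue_measure R).

Lemma barrier (a b : R) (f : R -> R) (N : set R) :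
  a <= b -> mu.-negligible N -> f a < 0 -> ac_real a b f ->
  (forall t, a <= t -> t <= b -> ~ N t -> f t <= 0 ->
     forall e, 0 < e -> exists2 del, 0 < del & forall w v, a <= w -> w <= t ->
       t <= v -> v <= b -> v - w < del -> f v - f w <= e * (v - w)) ->
  f b < 0.
Proof.
move=> ab [M [mM M0 NM]] fa0 AC H2.
set eta := - f a / 2.
have eta0 : 0 < eta by rewrite divr_gt0 // oppr_gt0.
have [dA dA0 HA] := AC eta eta0.
have [Op [oO MO OM]] : exists Op : set R, [/\ open Op, M `<=` Op & (mu (Op `\` M) < dA%:E)%E].
  apply: lebesgue_regularity_outer => //.
  have : forall x : \bar R, x = 0%E -> (x < +oo)%E by move=> x ->; exact: ltry.
  by apply; exact: M0.
have mO : measurable Op by apply: measurable_realfun.open_measurable.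
have muO : (mu Op < dA%:E)%E.
  have : (mu Op <= mu (Op `\` M) + mu M)%E.
    have mOM : measurable (Op `\` M) by exact: (measurableD mO mM).
    rewrite -measureU //.
    - apply: le_measure; rewrite ?inE //; first exact: measurableU.
      by move=> z Oz; have [Mz|nMz] := pselect (M z); [right|left].
    - by apply/seteqP; split => z // [[_ nM] Mz].
  move=> h; apply: (le_lt_trans h).
  have : forall x : \bar R, x = 0%E -> (mu (Op `\` M) + x < dA%:E)%E by move=> x ->; rewrite adde0.
  by apply; exact: M0.
set ep := eta / (b - a + 1).
have ba0 : 0 < b - a + 1 by rewrite ltr_wpDl // subr_ge0.
have ep0 : 0 < ep by rewrite divr_gt0.
have epb : ep * (b - a) < eta.
  by rewrite /ep mulrAC ltr_pdivrMr // ltr_pM2l // ltrDl.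
have sumlt L y : good a y Op L -> y <= b -> sumf f L < eta.
  by move=> gL yb; apply: (good_ac _ _ _ _ _ _ _ _ eta0 HA gL yb mO muO).
clear M0 OM muO.
pose P x := a <= x /\ x <= b /\ forall y, a <= y -> y <= x ->
  exists L, good a y Op L /\ f y <= f a + ep * (y - a) + sumf f L.
have Pneg x y : P x -> a <= y -> y <= x -> f y < 0.
  move=> [ax [xb H]] ay yx; have [L [gL hy]] := H y ay yx.
  have yb : y <= b := le_trans yx xb.
  have := sumlt L y gL yb.
  have : ep * (y - a) <= ep * (b - a).
    by apply: ler_wpM2l; [exact: ltW | apply: lerB].

  rewrite /eta in epb *; move: hy epb; lra.
have Pa : P a.
  split => //; split => // y ay ya; exists [::]; split; first exact: good_nil.
  have -> : y = a by apply/eqP; rewrite eq_le ay ya.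
  by rewrite subrr mulr0 addr0 /sumf big_ord0 addr0.
pose S := [set x | P x].
have hS : has_sup S.
  split; first by exists a.
  by exists b => x [_ []].
set s := sup S.
have a_s : a <= s by apply: sup_upper_bound.
have sb : s <= b by apply: ge_sup; [exists a | move=> x [_ []]].
have Pdown x y : P x -> a <= y -> y <= x -> P y.
  move=> [ax [xb H]] ay yx; split => //; split; first exact: le_trans xb.
  by move=> z az zy; apply: H => //; exact: le_trans yx.
have Pbelow y : a <= y -> y < s -> P y.
  move=> ay ys; have ys0 : 0 < s - y by rewrite subr_gt0.
  have [x Sx hx] := sup_adherent ys0 hS.
  apply: Pdown Sx ay _; apply: ltW; move: hx; rewrite -/s; lra.
have fs0 : f s <= 0.
  have [sa|sa] := eqVneq s a; first by rewrite sa ltW.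
  have a_lt_s : a < s by rewrite lt_def sa a_s.
  rewrite leNgt; apply/negP => fs_pos.
  have [dl dl0 Hdl] := AC (f s) fs_pos.
  set y := Num.max a (s - dl / 2).
  have ay : a <= y by rewrite le_max lexx.
  have dl2 : 0 < dl / 2 by rewrite divr_gt0.
  have ys : y < s by rewrite gt_max a_lt_s /= ltrBlDr ltrDl.
  have fy : f y < 0 := Pneg y y (Pbelow y ay ys) ay (lexx y).
  have sy : s - y < dl.
    have : s - dl / 2 <= y by rewrite le_max lexx orbT.
    move: dl0; lra.
  have := Hdl 1 (fun _ => (y, s)).
  rewrite !big_ord1 /= => /(_ _ _ sy).
  have := ler_norm (f s - f y).
  have H1 : forall i : 'I_1, a <= y /\ y <= s /\ s <= b by move=> i; split => //; split => //; exact: ltW.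
  have H2' : forall i j : 'I_1, i != j -> s <= y \/ s <= y by move=> i j; rewrite !ord1 eqxx.
  move=> hn /(_ H1 H2') hlt.
  clear H1 H2'; move: hn hlt fy; lra.
have [del del0 Hext] : exists2 del : R, 0 < del & forall x v, a <= x -> x <= s -> s <= v ->
    v <= b -> v - x < del -> P x -> P v.
  have [Ns|nNs] := pselect (N s).
  - have Os : Op s := MO s (NM s Ns).
    have := oO s Os; move=> /nbhs_ballP[r r0 Hr].
    exists r => // x v ax xs sv vb vx Px.
    split; first exact: le_trans ax (le_trans xs sv).
    split => // y ay yv.
    have [_ [_ Hx]] := Px.
    have [yx|xy] := leP y x; first exact: Hx.
    have [L [gL hx]] := Hx x ax (lexx x).
    exists (rcons L (x, y)); split.
    + apply: (good_rcons _ _ _ _ _ _ gL ax) => //=; first exact: ltW.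
      move=> z; rewrite /= in_itv /= => /andP[xz zy]; apply: Hr.
      rewrite /ball /= ltr_norml; apply/andP; split; lra.
    + rewrite sumf_rcons /=.
      have := ler_norm (f y - f x).
      have : ep * (x - a) <= ep * (y - a).
        by apply: ler_wpM2l; [exact: ltW | apply: lerB => //; exact: ltW].
      move: hx; lra.
  - have [dl dl0 Hd] := H2 s a_s sb nNs fs0 ep ep0.
    exists dl => // x v ax xs sv vb vx Px.
    split; first exact: le_trans ax (le_trans xs sv).
    split => // y ay yv.
    have [_ [_ Hx]] := Px.
    have [yx|xy] := leP y x; first exact: Hx.
    have [ys|sy] := ltP y s.
      by have [_ [_ Hy]] := Pbelow y ay ys; apply: Hy.
    have [L [gL hx]] := Hx x ax (lexx x).
    exists L; split; first exact: (good_mono _ _ _ _ _ gL (ltW xy)).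
    have := Hd x y ax xs sy (le_trans yv vb).
    have yx' : y - x < dl by move: vx yv; lra.
    move=> /(_ yx'); move: hx; lra.
have [x [ax [xs [sx Px]]]] : exists x, [/\ a <= x, x <= s, s - x < del / 2 & P x].
  have [sa|sa] := eqVneq s a.
    by exists a; split => //; rewrite -sa subrr divr_gt0.
  have a_lt_s : a < s by rewrite lt_def sa a_s.
  have d4 : 0 < del / 4 by rewrite divr_gt0.
  exists (Num.max a (s - del / 4)).
  have h1 : a <= Num.max a (s - del / 4) by rewrite le_max lexx.
  have h2 : Num.max a (s - del / 4) < s by rewrite gt_max a_lt_s /= ltrBlDr ltrDl.
  split => //; [exact: ltW| |exact: Pbelow].
  have : s - del / 4 <= Num.max a (s - del / 4) by rewrite le_max lexx orbT.
  move: del0; lra.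
have Ps : P s.
  by apply: (Hext x s) => //; move: sx del0; lra.
have sbE : s = b.
  apply/eqP; rewrite eq_le sb /= leNgt; apply/negP => sltb.
  set v := Num.min b (s + del / 4).
  have sv : s < v by rewrite lt_min sltb /= ltrDl divr_gt0.
  have vb : v <= b by rewrite ge_min lexx.
  have vx : v - x < del.
    have : v <= s + del / 4 by rewrite ge_min lexx orbT.
    move: sx del0; lra.
  have Pv : P v by apply: (Hext x v) => //; exact: ltW.
  have : v <= s by apply: sup_upper_bound.
  by rewrite leNgt sv.
by apply: (Pneg b b); rewrite -?sbE //; rewrite sbE in Ps; case: Ps.
Qed.

End Barrier2.
Section Helpers.
Context {R : realType} {d : nat}.
Notation vec := 'rV[R]_d.

Definition umax (k : nat) (y : 'I_k -> vec) : R := \big[Num.max/0]_(i < k) enorm (y i).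
Arguments umax {k} y.

Lemma umax_ge0 k (y : 'I_k -> vec) : 0 <= umax y.
Proof.
rewrite /umax; apply: (big_ind (fun v => 0 <= v)) => //.
by move=> p q hp hq; rewrite le_max hp.
by move=> i _; exact: enorm_ge0.
Qed.

Lemma le_umax k (y : 'I_k -> vec) i : enorm (y i) <= umax y.
Proof. exact: (le_bigmax _ (fun i => enorm (y i))). Qed.

Lemma umax_le k (y : 'I_k -> vec) c : 0 <= c -> (forall i, enorm (y i) <= c) -> umax y <= c.
Proof. by move=> c0 h; apply: bigmax_le. Qed.

Lemma umax_lt k (y : 'I_k -> vec) c : 0 < c -> (forall i, enorm (y i) < c) -> umax y < c.
Proof. by move=> c0 h; apply: bigmax_lt. Qed.

Lemma umax_step k (y z : 'I_k -> vec) c : 0 <= c -> (forall i, enorm (y i - z i) <= c) ->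
  umax y <= umax z + c.
Proof.
move=> c0 h; apply: umax_le; first by rewrite addr_ge0 // umax_ge0.
move=> i; have -> : y i = z i + (y i - z i) by rewrite addrC subrK.
by rewrite (le_trans (enormD _ _)) // lerD // le_umax.
Qed.

Lemma enorm_subC (p q : vec) : enorm (p - q) = enorm (q - p).
Proof. by rewrite -enormN opprB. Qed.

Lemma umax_diff k (y z : 'I_k -> vec) :
  `|umax y - umax z| <= \sum_(i < k) enorm (y i - z i).
Proof.
have s0 : 0 <= \sum_(i < k) enorm (y i - z i) by apply: sumr_ge0 => i _; exact: enorm_ge0.
have hy : forall i, enorm (y i - z i) <= \sum_(i < k) enorm (y i - z i).
  move=> i; rewrite (bigD1 i) //= lerDl; apply: sumr_ge0 => j _; exact: enorm_ge0.
have h1 := @umax_step _ y z _ s0 hy.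
have h2 : umax z <= umax y + \sum_(i < k) enorm (y i - z i).
  apply: (@umax_step _ z y _ s0) => i; rewrite enorm_subC; exact: hy.
rewrite ler_norml; apply/andP; split; move: h1 h2; lra.
Qed.

Lemma fin_delta (k : nat) (P : 'I_k -> R -> Prop) :
  (forall i, exists2 del, 0 < del & forall del', 0 < del' -> del' <= del -> P i del') ->
  exists2 del, 0 < del & forall i, P i del.
Proof.
move=> h.
have h' : forall i, exists del, 0 < del /\ forall del', 0 < del' -> del' <= del -> P i del'.
  by move=> i; have [del d0 hd] := h i; exists del.
have [g hg] := boolp.choice h'.
exists (\big[Num.min/1]_(i < k) g i).
  by apply: lt_bigmin => // i _; have [] := hg i.
move=> i; have [g0 hgi] := hg i; apply: hgi; last exact: bigmin_le.
by apply: lt_bigmin => // j _; have [] := hg j.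
Qed.

Lemma exp_lb (K C w t v : R) : 0 <= K -> C = K + 1 -> w <= t -> t <= v ->
  K * C * (v - w) <= 1 ->
  (v - w) * K * expR (C * t) <= expR (C * v) - expR (C * w).
Proof.
move=> K0 CE wt tv hKC.
set E := expR (C * (t - w)); set F := expR (C * (v - t)); set A := expR (C * w).
have hE : 1 + C * (t - w) <= E := expR_ge1Dx _.
have hF : 1 + C * (v - t) <= F := expR_ge1Dx _.
have A0 : 0 < A := expR_gt0 _.
have E0 : 0 < E := expR_gt0 _.
have et : expR (C * t) = A * E by rewrite -expRD; congr expR; ring.
have ev : expR (C * v) = A * E * F by rewrite -!expRD; congr expR; ring.
rewrite et ev.
have h1 : K * (t - w) * E <= E - 1.
  have htw : 0 <= t - w by rewrite subr_ge0.
  have hvt : 0 <= v - t by rewrite subr_ge0.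
  have hk : K * C * (t - w) <= 1.
    apply: le_trans hKC; apply: ler_wpM2l; [rewrite CE; nra| lra].
  have hk2 : K * (t - w) <= 1 by rewrite CE in hk; nra.
  rewrite CE in hE hk; nra.
have h2 : K * (v - t) * E <= E * F - E.
  have hvt : 0 <= v - t by rewrite subr_ge0.
  rewrite CE in hF; nra.
have : (v - w) * K * E <= E * F - 1 by move: h1 h2; lra.
move=> h; nra.
Qed.

Lemma exp_ub (C w v : R) : 0 <= C -> w <= v ->
  expR (C * v) - expR (C * w) <= C * (v - w) * expR (C * v).
Proof.
move=> C0 wv.
have h : 1 + (- (C * (v - w))) <= expR (- (C * (v - w))) := expR_ge1Dx _.
have ew : expR (C * w) = expR (C * v) * expR (- (C * (v - w))) by rewrite -expRD; congr expR; ring.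
rewrite ew; have := expR_gt0 (C * v); nra.
Qed.

End Helpers.
Arguments umax {R d k} y.
Section DBound.
Context {R : realType} {d : nat}.
Notation vec := 'rV[R]_d.

Lemma dbound (Omega : set vec) (W V : vec -> R) (C0 : R) (k : nat) (m : 'I_k -> R)
  (y : 'I_k -> vec) (i : 'I_k) (D : vec) :
  0 <= C0 -> (forall j, 0 <= m j) -> \sum_(j < k) m j = 1 -> Omega (y i) ->
  (forall x, enorm (grad W x) <= C0 * (1 + enorm x)) ->
  (forall x, enorm (grad V x) <= C0 * (1 + enorm x)) ->
  nearest (tcone Omega (y i))
    (- (\sum_(j < k) m j *: grad W (y i - y j)) - grad V (y i)) D ->
  enorm D <= 6 * C0 * (1 + umax y).
Proof.
move=> C00 m0 m1 Oy hW hV [_ hD].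
set w := - (\sum_(j < k) m j *: grad W (y i - y j)) - grad V (y i).
have c0 : tcone Omega (y i) 0.
  apply: subset_closure; exists 0, (y i); split => //; split => //.
  by rewrite scale0r.
have h1 : enorm (w - D) <= enorm w by have := hD 0 c0; rewrite subr0.
have h2 : enorm D <= 2 * enorm w.
  have -> : D = w - (w - D) by rewrite opprB addrC subrK.
  apply: le_trans (enormB _ _) _; lra.
have u0 := umax_ge0 _ y.
have hs : enorm (\sum_(j < k) m j *: grad W (y i - y j)) <= C0 * (1 + 2 * umax y).
  rewrite (le_trans (enorm_sum _ _ _ _)) //.
  have -> : C0 * (1 + 2 * umax y) = \sum_(j < k) m j * (C0 * (1 + 2 * umax y)).
    by rewrite -mulr_suml m1 mul1r.
  apply: ler_sum => j _; rewrite enormZ ger0_norm // ler_wpM2l //.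
  rewrite (le_trans (hW _)) // ler_wpM2l // lerD2l.
  apply: le_trans (enormB _ _) _.
  have := le_umax _ y i; have := le_umax _ y j; lra.
have hv : enorm (grad V (y i)) <= C0 * (1 + umax y).
  by rewrite (le_trans (hV _)) // ler_wpM2l // lerD2l le_umax.
have hw : enorm w <= C0 * (1 + 2 * umax y) + C0 * (1 + umax y).
  apply: le_trans (enormB _ _) _; rewrite enormN; exact: (lerD hs hv).
move: h2 hw hs hv; nra.
Qed.

End DBound.
Theorem lemma4p3 (R : realType) (d : nat) (Omega : set 'rV[R]_d)
  (W V : 'rV[R]_d -> R) (lamW lamV C0 : R) :
  closed Omega -> convex_set Omega -> Omega !=set0 ->
  ~ (exists r : R, Omega `<=` eball0 r) ->
  C1 W -> C1 V ->
  lam_convex_on (diffset Omega) lamW W ->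
  lam_convex_on Omega lamV V ->
  (forall x, enorm (grad W x) <= C0 * (1 + enorm x)) ->
  (forall x, enorm (grad V x) <= C0 * (1 + enorm x)) ->
  exists2 C : R, 0 < C &
    forall (n k : nat) (x0 : 'I_k -> 'rV[R]_d) (m : 'I_k -> R)
           (x : 'I_k -> R -> 'rV[R]_d),
      (forall i, Omega (x0 i) /\ eball0 n%:R (x0 i)) ->
      (forall i, 0 <= m i) -> \sum_(i < k) m i = 1 ->
      (forall i, loc_abs_cont (x i)) ->
      (forall i t, 0 <= t -> Omega (x i t)) ->
      (forall i, x i 0 = x0 i) ->
      (forall i, {ae lebesgue_measure, forall t : R, 0 <= t ->
         derivable (x i) t 1 /\
         nearest (tcone Omega (x i t))
           (- (\sum_(j < k) m j *: grad W (x i t - x j t)) - grad V (x i t))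
           ('D_1 (x i) t)}) ->
      exists r : R -> R, forall t : R, 0 <= t ->
        r t <= (n%:R + 1) * expR (C * t) /\
        supp_emp m (fun i => x i t) `<=` Omega `&` eball0 (r t).
Proof.
move=> _ _ _ _ _ _ _ _ hW hV.
have C00 : 0 <= C0.
  have := hV 0; rewrite enorm0 addr0 mulr1; apply: le_trans; exact: enorm_ge0.
set K := 6 * C0.
have K0 : 0 <= K by rewrite /K mulr_ge0.
exists (K + 1); first by rewrite ltr_wpDl.
move=> n k x0 m x hx0 hm0 hm1 hac hOm hx0E hae.
set C := K + 1.
have C0' : 0 < C by rewrite /C ltr_wpDl.
have kpos : (0 < k)%N.
  rewrite lt0n; apply/eqP => k0.
  have : \sum_(i < k) m i = 0 by apply: big1 => i _; have := ltn_ord i; rewrite {2}k0.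
  by rewrite hm1 => /eqP; rewrite oner_eq0.
pose i0 : 'I_k := Ordinal kpos.
have n0 : 0 < n%:R :> R.
  by have [_ h] := hx0 i0; apply: le_lt_trans h; exact: enorm_ge0.
pose u t := umax (fun i => x i t).
pose Rb t := (n%:R + 1) * expR (C * t) - 1.
pose f t := u t - Rb t.
pose P i t := derivable (x i) t 1 /\
         nearest (tcone Omega (x i t))
           (- (\sum_(j < k) m j *: grad W (x i t - x j t)) - grad V (x i t))
           ('D_1 (x i) t).
pose S i : set R := ~` [set t | 0 <= t -> P i t].
have hS i : lebesgue_measure.-negligible (S i) := hae i.
pose G (j : nat) : set R := if insub j is Some i then S i else set0.
pose N := \bigcup_j G j.
have hN : lebesgue_measure.-negligible N.
  apply: negligible_bigcup => j; rewrite /G.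
  by case: insub => [i|]; [exact: hS | exact: negligible_set0].
have hNp i t : ~ N t -> 0 <= t -> P i t.
  move=> nN t0; apply: contrapT => nP; apply: nN; exists (val i) => //.
  by rewrite /G valK; move=> h; apply: nP; apply: h.
have main T : 0 <= T -> u T < Rb T.
  move=> T0; rewrite -subr_lt0 -/(f T).
  apply: (barrier 0 T f N T0 hN).
  - rewrite /f /Rb mulr0 expR0 mulr1 addrK subr_lt0.
    apply: umax_lt => // i; rewrite hx0E; have [_ h] := hx0 i; exact: h.
  - move=> e e0.
    set e' := e / (2 * (k%:R + 1)).
    have k10 : 0 < 2 * (k%:R + 1) :> R by rewrite mulr_gt0 // ltr_wpDl.
    have e'0 : 0 < e' by rewrite divr_gt0.
    have he' : e' * (2 * (k%:R + 1)) = e by rewrite divfK // gt_eqF.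
    have hi : forall i : 'I_k, exists2 del : R, 0 < del & forall del', 0 < del' -> del' <= del ->
      forall (nn : nat) (s : 'I_nn -> R * R),
      (forall l, 0 <= (s l).1 /\ (s l).1 <= (s l).2 /\ (s l).2 <= T) ->
      (forall l l', l != l' -> (s l).2 <= (s l').1 \/ (s l').2 <= (s l).1) ->
      \sum_(l < nn) ((s l).2 - (s l).1) < del' ->
      \sum_(l < nn) enorm (x i (s l).2 - x i (s l).1) < e'.
      move=> i; have [del del0 H] := hac i T T0 e' e'0.
      exists del => // del' _ hle nn s c1 c2 hs; apply: H => //; exact: lt_le_trans hs hle.
    have [d1 d10 hd1] := fin_delta _ _ hi.
    set Lip := (n%:R + 1) * C * expR (C * T).
    have Lip0 : 0 <= Lip by rewrite /Lip !mulr_ge0 ?addr_ge0 ?expR_ge0 // ltW.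
    have L10 : 0 < 2 * Lip + 1 by rewrite ltr_wpDl // mulr_ge0.
    set q := e / (2 * Lip + 1).
    have q0 : 0 < q by rewrite divr_gt0.
    have hq : q * (2 * Lip + 1) = e by rewrite divfK // gt_eqF.
    exists (Num.min d1 q); first by rewrite lt_min d10 q0.
    move=> nn s c1 c2 hs.
    have hs1 : \sum_(l < nn) ((s l).2 - (s l).1) < d1.
      by apply: lt_le_trans hs _; rewrite ge_min lexx.
    have hs2 : \sum_(l < nn) ((s l).2 - (s l).1) < q.
      by apply: lt_le_trans hs _; rewrite ge_min lexx orbT.
    have hterm l : `|f (s l).2 - f (s l).1| <=
        \sum_(i < k) enorm (x i (s l).2 - x i (s l).1) + Lip * ((s l).2 - (s l).1).
      have [a1 [a12 a2]] := c1 l.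
      have hR : `|Rb (s l).2 - Rb (s l).1| <= Lip * ((s l).2 - (s l).1).
        have -> : Rb (s l).2 - Rb (s l).1 =
            (n%:R + 1) * (expR (C * (s l).2) - expR (C * (s l).1)) by rewrite /Rb; ring.
        have e1 := exp_ub _ _ _ (ltW C0') a12.
        have e2 : expR (C * (s l).2) <= expR (C * T) by rewrite ler_expR ler_wpM2l // ltW.
        have e3 : expR (C * (s l).1) <= expR (C * (s l).2) by rewrite ler_expR ler_wpM2l // ltW.
        have n10 : 0 < n%:R + 1 :> R by rewrite ltr_wpDl.
        have l0 : 0 <= (s l).2 - (s l).1 by rewrite subr_ge0.
        rewrite ger0_norm ?mulr_ge0 ?subr_ge0 ?(ltW n10) // /Lip.
        have : C * ((s l).2 - (s l).1) * expR (C * (s l).2) <=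
               C * ((s l).2 - (s l).1) * expR (C * T).
          by apply: ler_wpM2l => //; rewrite mulr_ge0 // ltW.
        move=> h4; have h5 := le_trans e1 h4.
        have := ler_wpM2l (ltW n10) h5.
        by move=> h6; apply: le_trans h6 _; rewrite le_eqVlt; apply/orP; left; apply/eqP; ring.
      have hU := umax_diff _ (fun i => x i (s l).2) (fun i => x i (s l).1).
      rewrite /f (_ : _ - _ = (u (s l).2 - u (s l).1) - (Rb (s l).2 - Rb (s l).1)); last by ring.
      apply: le_trans (ler_normB _ _) _; apply: lerD => //.
    rewrite (le_lt_trans (ler_sum _ (fun l _ => hterm l))) //.
    rewrite big_split /= exchange_big /= -mulr_sumr.
    have hA : \sum_(i < k) \sum_(l < nn) enorm (x i (s l).2 - x i (s l).1) <= k%:R * e'.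
      apply: le_trans (ler_sum _ (fun i _ => ltW (hd1 i nn s c1 c2 hs1))) _.
      by rewrite sumr_const cardT size_enum_ord mulr_natl.
    have hL : Lip * \sum_(l < nn) ((s l).2 - (s l).1) <= Lip * q by apply: ler_wpM2l => //; exact: ltW.
    move: hA hL he' hq e'0 q0; lra.
  - move=> t t0 tT nNt ft e e0.
    have hP i : P i t := hNp i t nNt t0.
    have hi : forall i : 'I_k, exists2 del : R, 0 < del & forall del', 0 < del' -> del' <= del ->
        forall s, `|s - t| < del' ->
        enorm (x i s - x i t - (s - t) *: 'D_1 (x i) t) <= e * `|s - t|.
      move=> i; have [del del0 H] := deriv_est _ _ (hP i).1 e e0.
      exists del => // del' _ hle s hs; apply: H; exact: lt_le_trans hs hle.
    have [d1 d10 hd1] := fin_delta _ _ hi.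
    have KC0 : 0 <= K * C by rewrite mulr_ge0 // ltW.
    have KC1 : 0 < K * C + 1 by rewrite ltr_wpDl.
    set d0 := 1 / (K * C + 1).
    have d00 : 0 < d0 by rewrite divr_gt0.
    exists (Num.min d1 d0); first by rewrite lt_min d10 d00.
    move=> w v w0 wt tv vT vw.
    have vw1 : v - w < d1 by apply: lt_le_trans vw _; rewrite ge_min lexx.
    have vw0 : v - w < d0 by apply: lt_le_trans vw _; rewrite ge_min lexx orbT.
    have hKC : K * C * (v - w) <= 1.
      move: vw0; rewrite /d0 ltr_pdivlMr // => h.
      have : 0 <= v - w by rewrite subr_ge0 (le_trans wt).
      move: h; nra.
    set ut := u t.
    have ut0 : 0 <= ut by apply: umax_ge0.
    have hD i : enorm ('D_1 (x i) t) <= K * (1 + ut).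
      exact: (dbound Omega W V C0 k m (fun j => x j t) i _ C00 hm0 hm1 (hOm i t t0) hW hV (hP i).2).
    have hx i : enorm (x i v - x i w) <= (v - w) * (K * (1 + ut) + e).
      set D := 'D_1 (x i) t.
      have h1 : enorm (x i v - x i t - (v - t) *: D) <= e * (v - t).
        rewrite -[X in _ <= _ * X]ger0_norm ?subr_ge0 //; apply: hd1.
        by rewrite ger0_norm ?subr_ge0 //; apply: le_lt_trans vw1; rewrite lerD2l lerN2.
      have h2 : enorm (x i w - x i t - (w - t) *: D) <= e * (t - w).
        rewrite -[X in _ <= _ * X]ger0_norm ?subr_ge0 // -normrN opprB; apply: hd1.
        by rewrite -normrN opprB ger0_norm ?subr_ge0 //; apply: le_lt_trans vw1; rewrite lerD2r.
      have e1 : enorm (x i v - x i w) <= enorm (x i v - x i t) + enorm (x i w - x i t).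
        have -> : x i v - x i w = (x i v - x i t) + (x i t - x i w) by rewrite addrA subrK.
        by rewrite (le_trans (enormD _ _)) // (enorm_subC (x i t)).
      have e2 : enorm (x i v - x i t) <= e * (v - t) + (v - t) * enorm D.
        have -> : x i v - x i t = (x i v - x i t - (v - t) *: D) + (v - t) *: D by rewrite subrK.
        apply: le_trans (enormD _ _) _; rewrite enormZ ger0_norm ?subr_ge0 //; exact: lerD.
      have e3 : enorm (x i w - x i t) <= e * (t - w) + (t - w) * enorm D.
        have -> : x i w - x i t = (x i w - x i t - (w - t) *: D) + (w - t) *: D by rewrite subrK.
        apply: le_trans (enormD _ _) _; rewrite enormZ -normrN opprB ger0_norm ?subr_ge0 //.
        exact: lerD.
      have hDi := hD i.
      have vt0 : 0 <= v - t by rewrite subr_ge0.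
      have tw0 : 0 <= t - w by rewrite subr_ge0.
      have e4 : (v - t) * enorm D <= (v - t) * (K * (1 + ut)) by apply: ler_wpM2l.
      have e5 : (t - w) * enorm D <= (t - w) * (K * (1 + ut)) by apply: ler_wpM2l.
      move: e1 e2 e3 e4 e5; lra.
    have vw00 : 0 <= v - w by rewrite subr_ge0 (le_trans wt).
    have hu : u v <= u w + (v - w) * (K * (1 + ut) + e).
      apply: umax_step => //; apply: mulr_ge0 => //; apply: addr_ge0; last exact: ltW.
      by apply: mulr_ge0 => //; apply: addr_ge0.
    have hexp := exp_lb K C w t v K0 (erefl _) wt tv hKC.
    have hft : 1 + ut <= (n%:R + 1) * expR (C * t).
      by move: ft; rewrite /f /Rb -/ut; lra.
    have h7 : (v - w) * K * (1 + ut) <= (v - w) * K * ((n%:R + 1) * expR (C * t)).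
      by apply: ler_wpM2l => //; rewrite mulr_ge0.
    have n10 : 0 <= n%:R + 1 :> R by rewrite addr_ge0.
    have h8 := ler_wpM2l n10 hexp.
    rewrite /f /Rb; move: hu h7 h8; nra.
have hu t i : enorm (x i t) <= u t by apply: (le_umax _ (fun i => x i t)).
exists (fun t => (n%:R + 1) * expR (C * t)) => t t0; split => //.
move=> y [i [mi ->]]; split; first exact: hOm.
rewrite /eball0 /=; apply: le_lt_trans (hu t i) _.
by apply: lt_le_trans (main t t0) _; rewrite /Rb gerBl.
Qed.
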